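(* Let $n\in\mathbb{N}$, $f:\{0,1\}^n\to\mathbb{R}$ and $\alpha,\beta>0$. Define $g:[0,1]\to\mathbb{R}$ by $g(p)=\mathbb{E}_{X_1,\dots,X_n\sim p}[f(X)]$, where $X_1,\dots,X_n$ are independent $\mathsf{Bernoulli}(p)$. Then $$\mathbb{E}_{P\sim\mathsf{Beta}(\alpha,\beta),\ X_1,\dots,X_n\sim P}\Big[f(X)\sum_{i\in[n]}(X_i-P)\Big]=(\alpha+\beta)\,\mathbb{E}_{P\sim\mathsf{Beta}(\alpha,\beta)}\Big[g(P)\Big(P-\frac{\alpha}{\alpha+\beta}\Big)\Big],$$ where on the left $X_1,\dots,X_n$ are independent $\mathsf{Bernoulli}(P)$ conditioned on $P$.
   Context: $\mathsf{Beta}(\alpha,\beta)$ is the distribution on $[0,1]$ with density $p^{\alpha-1}(1-p)^{\beta-1}/\mathsf{B}(\alpha,\beta)$, where $\mathsf{B}(\alpha,\beta)=\int_0^1p^{\alpha-1}(1-p)^{\beta-1}\,dp$. *)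

(* Defs.v *)
From Stdlib Require Import Reals List.
Import ListNotations.
Open Scope R_scope.

(* All points of {0,1}^n, as boolean lists of length n (true = 1). *)
Fixpoint cube (n : nat) : list (list bool) :=
  match n with
  | O => [nil]
  | S m => map (cons true) (cube m) ++ map (cons false) (cube m)
  end.

Definition b2R (b : bool) : R := if b then 1 else 0.

Definition sumR (l : list R) : R := List.fold_right Rplus 0%R l.

Definition bern_prob (p : R) (x : list bool) : R :=
  List.fold_right (fun (b : bool) (acc : R) => (if b then p else 1 - p) * acc) 1 x.

Definition bern_expect (n : nat) (p : R) (h : list bool -> R) : R :=
  sumR (map (fun x => bern_prob p x * h x) (cube n)).

(* Unnormalised Beta density on (0,1). *)
Definition beta_dens (a b : R) (p : R) : R :=
  Rpower p (a - 1) * Rpower (1 - p) (b - 1).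

Definition improper01 (h : R -> R) (L : R) : Prop :=
  forall eps, eps > 0 -> exists delta, delta > 0 /\
    forall u v, 0 < u < delta -> 1 - delta < v < 1 ->
      exists pr : Riemann_integrable h u v, Rabs (RiemannInt pr - L) < eps.

Definition beta_expect (a b : R) (h : R -> R) (E : R) : Prop :=
  exists B I, improper01 (beta_dens a b) B /\
              improper01 (fun p => h p * beta_dens a b p) I /\
              E = I / B.

(* Main.v *)
Require Import Defs.
From Stdlib Require Import Reals List Lra FunctionalExtensionality.
From Coquelicot Require Import Coquelicot.
Open Scope R_scope.

Lemma exp_le_mono x y : x <= y -> exp x <= exp y.
Proof. intros [H|H]. left; apply exp_increasing; auto. subst; lra. Qed.

Lemma Rpow_pos x c : 0 < Rpower x c.
Proof. unfold Rpower; apply exp_pos. Qed.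

Lemma Rpower_1_base c : Rpower 1 c = 1.
Proof. unfold Rpower; rewrite ln_1, Rmult_0_r; apply exp_0. Qed.

Lemma Rpow_le1 x c : 0 < x <= 1 -> 0 <= c -> Rpower x c <= 1.
Proof. intros Hx Hc. rewrite <- (Rpower_1_base c). apply Rle_Rpower_l; lra. Qed.

Lemma Rpow_bound_half x c : 1/2 <= x <= 1 -> Rpower x c <= exp (Rabs c * ln 2).
Proof.
  intros Hx. unfold Rpower. apply exp_le_mono.
  assert (H1: ln x <= 0) by (rewrite <- ln_1; apply ln_le; lra).
  assert (H2: ln (/2) <= ln x) by (apply ln_le; lra).
  rewrite ln_Rinv in H2 by lra.
  assert (c * ln x <= Rabs c * Rabs (ln x)).
  { rewrite <- Rabs_mult. apply Rle_abs. }
  assert (Rabs (ln x) <= ln 2) by (rewrite Rabs_left1; lra).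
  assert (0 <= Rabs c) by apply Rabs_pos.
  nra.
Qed.

Lemma dRpow x c : 0 < x -> is_derive (fun p => Rpower p c) x (c * Rpower x (c-1)).
Proof. intros; apply is_derive_Reals; apply derivable_pt_lim_power; auto. Qed.

Lemma dRpow1 x c : x < 1 -> is_derive (fun p => Rpower (1 - p) c) x (- (c * Rpower (1-x) (c-1))).
Proof.
  intros H. apply is_derive_Reals.
  replace (- (c * Rpower (1 - x) (c - 1))) with ((c * Rpower (1 - x) (c - 1)) * (-1)) by ring.
  apply (derivable_pt_lim_comp (fun p => 1 - p) (fun p => Rpower p c)).
  - replace (-1) with (0 - 1) by ring. apply derivable_pt_lim_minus.
    apply derivable_pt_lim_const. apply derivable_pt_lim_id.
  - apply derivable_pt_lim_power; lra.
Qed.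

Lemma cRpow x c : 0 < x -> continuous (fun p => Rpower p c) x.
Proof. intros; apply (ex_derive_continuous (fun p => Rpower p c)); eexists; apply dRpow; auto. Qed.

Lemma cRpow1 x c : x < 1 -> continuous (fun p => Rpower (1-p) c) x.
Proof. intros; apply (ex_derive_continuous (fun p => Rpower (1-p) c)); eexists; apply dRpow1; auto. Qed.

Lemma c_w a b x : 0 < x < 1 -> continuous (beta_dens a b) x.
Proof. intros; unfold beta_dens. apply (continuous_mult (fun p => Rpower p (a-1)) (fun p => Rpower (1-p) (b-1))).
  apply cRpow; lra. apply cRpow1; lra. Qed.

Definition imp (F : R -> R) (L : R) := forall eps, eps > 0 -> exists d, 0 < d <= 1/2 /\
  forall u v, 0 < u < d -> 1 - d < v < 1 -> Rabs (RInt (V:=R_CompleteNormedModule) F u v - L) < eps.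

Lemma ex_cont (F : R -> R) x y : (forall z, 0 < z < 1 -> continuous F z) -> 0 < x < 1 -> 0 < y < 1 -> ex_RInt F x y.
Proof.
  intros HF Hx Hy. apply (ex_RInt_continuous (V:=R_CompleteNormedModule)). intros z Hz. apply HF.
  unfold Rmin, Rmax in Hz; destruct Rle_dec; lra.
Qed.

Lemma imp_improper (F : R -> R) L : (forall x, 0 < x < 1 -> continuous F x) -> imp F L -> improper01 F L.
Proof.
  intros HF HL eps He. destruct (HL eps He) as [d [Hd H]]. exists d; split; [lra|].
  intros u v Hu Hv. assert (E: ex_RInt F u v) by (apply ex_cont; auto; lra).
  exists (ex_RInt_Reals_0 _ _ _ E). rewrite <- RInt_Reals. apply H; auto.
Qed.

Lemma w_bound a b : exists K, 0 < K /\ forall p, 0 < p < 1 ->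
  beta_dens a b p <= K * (Rpower p (a-1) + Rpower (1-p) (b-1)).
Proof.
  exists (exp (Rabs (a-1) * ln 2) + exp (Rabs (b-1) * ln 2)). split.
  { pose proof (exp_pos (Rabs (a-1) * ln 2)); pose proof (exp_pos (Rabs (b-1) * ln 2)); lra. }
  intros p Hp. unfold beta_dens.
  pose proof (Rpow_pos p (a-1)); pose proof (Rpow_pos (1-p) (b-1)).
  pose proof (exp_pos (Rabs (a-1) * ln 2)); pose proof (exp_pos (Rabs (b-1) * ln 2)).
  destruct (Rle_dec p (1/2)).
  - pose proof (Rpow_bound_half (1-p) (b-1)). nra.
  - pose proof (Rpow_bound_half p (a-1)). nra.
Qed.

Definition Wf a b p := / a * Rpower p a - / b * Rpower (1-p) b.

Lemma dW a b x : a > 0 -> b > 0 -> 0 < x < 1 ->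
  derivable_pt_lim (Wf a b) x (Rpower x (a-1) + Rpower (1-x) (b-1)).
Proof.
  intros Ha Hb Hx.
  assert (D1 := proj1 (is_derive_Reals _ _ _) (dRpow x a ltac:(lra))).
  assert (D2 := proj1 (is_derive_Reals _ _ _) (dRpow1 x b ltac:(lra))).
  assert (H := derivable_pt_lim_minus (mult_real_fct (/a) (fun p => Rpower p a)) (mult_real_fct (/b) (fun p => Rpower (1-p) b)) x _ _ (derivable_pt_lim_scal _ _ _ _ D1) (derivable_pt_lim_scal _ _ _ _ D2)).
  unfold minus_fct, mult_real_fct in H.
  replace (Rpower x (a-1) + Rpower (1-x) (b-1)) with
    (/ a * (a * Rpower x (a - 1)) - / b * - (b * Rpower (1 - x) (b - 1))) by (field; lra).
  exact H.
Qed.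

Lemma W_lo a b p : a > 0 -> b > 0 -> 0 < p < 1 -> - / b <= Wf a b p.
Proof.
  intros. unfold Wf. pose proof (Rpow_pos p a). pose proof (Rpow_le1 (1-p) b ltac:(lra) ltac:(lra)).
  assert (0 < /a) by (apply Rinv_0_lt_compat; lra). assert (0 < /b) by (apply Rinv_0_lt_compat; lra). nra.
Qed.

Lemma W_hi a b p : a > 0 -> b > 0 -> 0 < p < 1 -> Wf a b p <= / a.
Proof.
  intros. unfold Wf. pose proof (Rpow_pos (1-p) b). pose proof (Rpow_le1 p a ltac:(lra) ltac:(lra)).
  assert (0 < /a) by (apply Rinv_0_lt_compat; lra). assert (0 < /b) by (apply Rinv_0_lt_compat; lra). nra.
Qed.

Lemma int_bound (h : R -> R) a b M K x y : a > 0 -> b > 0 ->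
  (forall p, continuous h p) -> (forall p, 0 <= p <= 1 -> Rabs (h p) <= M) -> 0 <= M -> 0 < K ->
  (forall p, 0 < p < 1 -> beta_dens a b p <= K * (Rpower p (a-1) + Rpower (1-p) (b-1))) ->
  0 < x <= y -> y < 1 ->
  Rabs (RInt (fun p => h p * beta_dens a b p) x y) <= M * K * (Wf a b y - Wf a b x).
Proof.
  intros Ha Hb Hh HM HM0 HK Hw Hx Hy.
  set (G := fun p => M * K * (Rpower p (a-1) + Rpower (1-p) (b-1))).
  assert (cG : forall p, 0 < p < 1 -> continuous G p).
  { intros p Hp. unfold G. apply (continuous_mult (fun _ => M*K) (fun p => Rpower p (a-1) + Rpower (1-p) (b-1))).
    apply continuous_const. apply (continuous_plus (fun p => Rpower p (a-1)) (fun p => Rpower (1-p) (b-1))).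
    apply cRpow; lra. apply cRpow1; lra. }
  assert (IG : is_RInt G x y (M*K*(Wf a b y - Wf a b x))).
  { replace (M*K*(Wf a b y - Wf a b x)) with (minus ((fun p => M*K*Wf a b p) y) ((fun p => M*K*Wf a b p) x))
      by (unfold minus, plus, opp; simpl; ring).
    apply (is_RInt_derive (V:=R_CompleteNormedModule) (fun p => M*K*Wf a b p)).
    - intros z Hz. unfold Rmin, Rmax in Hz; destruct Rle_dec; try lra.
      apply is_derive_Reals. unfold G. apply (derivable_pt_lim_scal (Wf a b) (M*K)). apply dW; lra.
    - intros z Hz. unfold Rmin, Rmax in Hz; destruct Rle_dec; try lra. apply cG; lra. }
  assert (chw : forall z, 0 < z < 1 -> continuous (fun p => h p * beta_dens a b p) z).
  { intros z Hz. apply (continuous_mult h (beta_dens a b)). apply Hh. apply c_w; auto. }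
  assert (E1 : ex_RInt (fun p => h p * beta_dens a b p) x y) by (apply ex_cont; auto; lra).
  assert (E2 : ex_RInt G x y) by (eexists; eauto).
  rewrite <- (is_RInt_unique _ _ _ _ IG).
  apply Rabs_le; split.
  - assert (RInt (fun p => opp (G p)) x y <= RInt (fun p => h p * beta_dens a b p) x y).
    { apply RInt_le; try lra. apply (ex_RInt_opp (V:=R_NormedModule)); auto. auto.
      intros z Hz. unfold opp; simpl. unfold G.
      assert (0 <= beta_dens a b z) by (unfold beta_dens; pose proof (Rpow_pos z (a-1)); pose proof (Rpow_pos (1-z) (b-1)); nra).
      pose proof (HM z ltac:(lra)). pose proof (Hw z ltac:(lra)).
      assert (- h z <= M) by (pose proof (Rle_abs (- h z)); rewrite Rabs_Ropp in *; lra). nra. }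
    rewrite (RInt_opp (V:=R_CompleteNormedModule)) in H by auto. exact H.
  - apply RInt_le; try lra; auto. intros z Hz. unfold G.
    assert (0 <= beta_dens a b z) by (unfold beta_dens; pose proof (Rpow_pos z (a-1)); pose proof (Rpow_pos (1-z) (b-1)); nra).
    pose proof (HM z ltac:(lra)). pose proof (Hw z ltac:(lra)).
    pose proof (Rle_abs (h z)). nra.
Qed.

Lemma small1 c e : c > 0 -> e > 0 -> exists d0, 0 < d0 /\ forall d, 0 < d <= d0 -> Rpower d c < e.
Proof.
  intros Hc He. exists (Rpower (e/2) (/c)). split. apply Rpow_pos.
  intros d Hd. apply Rle_lt_trans with (Rpower (Rpower (e/2) (/c)) c).
  apply Rle_Rpower_l; lra. rewrite Rpower_mult, Rinv_l by lra. rewrite Rpower_1 by lra. lra.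
Qed.

Lemma small2 c e : e > 0 -> exists d0, 0 < d0 /\ forall d, 0 < d <= d0 -> 1 - Rpower (1 - d) c < e.
Proof.
  intros He. assert (H := cRpow 1 c ltac:(lra)). apply continuity_pt_filterlim in H.
  unfold continuity_pt, continue_in, limit1_in, limit_in in H. simpl in H.
  destruct (H e He) as [alp [Ha Hx]]. exists (Rmin (alp/2) (1/2)). split.
  apply Rmin_pos; lra.
  intros d Hd. assert (d < alp) by (pose proof (Rmin_l (alp/2) (1/2)); lra).
  specialize (Hx (1 - d)). unfold R_dist in Hx. rewrite Rpower_1_base in Hx.
  assert (Rabs (Rpower (1 - d) c - 1) < e).
  { apply Hx. split. unfold D_x, no_cond. split; auto; lra. simpl. unfold R_dist. rewrite Rabs_left1; lra. }
  assert (Hq := Rle_abs (- (Rpower (1 - d) c - 1))). rewrite Rabs_Ropp in Hq. lra.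
Qed.

Lemma imp_exists a b (h : R -> R) : a > 0 -> b > 0 -> (forall p, continuous h p) ->
  exists L, imp (fun p => h p * beta_dens a b p) L.
Proof.
  intros Ha Hb Hh.
  set (hw := fun p => h p * beta_dens a b p).
  destruct (continuity_ab_maj (fun p => Rabs (h p)) 0 1 ltac:(lra)) as [Mx [HMx _]].
  { intros c _. apply continuity_pt_filterlim.
    apply (continuous_comp h Rabs). apply Hh. apply continuous_Rabs. }
  set (M := Rabs (h Mx)). assert (HM0 : 0 <= M) by apply Rabs_pos.
  destruct (w_bound a b) as [K [HK Hw]].
  assert (IB : forall x y, 0 < x <= y -> y < 1 -> Rabs (RInt hw x y) <= M * K * (Wf a b y - Wf a b x)).
  { intros; apply int_bound; auto. }
  assert (chw : forall z, 0 < z < 1 -> continuous hw z).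
  { intros z Hz. apply (continuous_mult h (beta_dens a b)). apply Hh. apply c_w; auto. }
  set (Fl := fun (P : R -> Prop) => exists d, 0 < d <= 1/2 /\
        forall u v, 0 < u < d -> 1 - d < v < 1 -> P (RInt hw u v)).
  assert (PF : ProperFilter Fl).
  { constructor.
    - intros P [d [Hd HP]]. exists (RInt hw (d/2) (1 - d/2)). apply HP; lra.
    - constructor.
      + exists (1/2). split. lra. auto.
      + intros P Q [d1 [H1 P1]] [d2 [H2 P2]]. exists (Rmin d1 d2). split.
        split. apply Rmin_pos; lra. pose proof (Rmin_l d1 d2); lra.
        intros u v Hu Hv. pose proof (Rmin_l d1 d2); pose proof (Rmin_r d1 d2).
        split; [apply P1|apply P2]; lra.
      + intros P Q HPQ [d [Hd HP]]. exists d; split; auto. }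
  assert (CF : cauchy Fl).
  { intros [eps Heps]. simpl.
    set (C := M * K * (2/a + 2/b) + 1).
    assert (HS : 0 <= 2/a + 2/b).
    { assert (0 < /a) by (apply Rinv_0_lt_compat; lra). assert (0 < /b) by (apply Rinv_0_lt_compat; lra).
      unfold Rdiv; lra. }
    assert (HC : 0 < C) by (unfold C; assert (0 <= M*K) by nra; nra).
    set (e := eps / C). assert (He : e > 0) by (unfold e; apply Rdiv_lt_0_compat; lra).
    destruct (small1 a e Ha He) as [d1 [H1 P1]].
    destruct (small1 b e Hb He) as [d2 [H2 P2]].
    destruct (small2 a e He) as [d3 [H3 P3]].
    destruct (small2 b e He) as [d4 [H4 P4]].
    assert (Hd : let d := Rmin (1/2) (Rmin (Rmin d1 d2) (Rmin d3 d4)) in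
       0 < d <= 1/2 /\ d <= d1 /\ d <= d2 /\ d <= d3 /\ d <= d4).
    { assert (0 < Rmin d1 d2) by (apply Rmin_pos; lra). assert (0 < Rmin d3 d4) by (apply Rmin_pos; lra).
      assert (0 < Rmin (Rmin d1 d2) (Rmin d3 d4)) by (apply Rmin_pos; lra).
      assert (0 < Rmin (1/2) (Rmin (Rmin d1 d2) (Rmin d3 d4))) by (apply Rmin_pos; lra).
      pose proof (Rmin_l d1 d2). pose proof (Rmin_r d1 d2). pose proof (Rmin_l d3 d4). pose proof (Rmin_r d3 d4).
      pose proof (Rmin_l (Rmin d1 d2) (Rmin d3 d4)). pose proof (Rmin_r (Rmin d1 d2) (Rmin d3 d4)).
      pose proof (Rmin_l (1/2) (Rmin (Rmin d1 d2) (Rmin d3 d4))). pose proof (Rmin_r (1/2) (Rmin (Rmin d1 d2) (Rmin d3 d4))).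
      simpl. lra. }
    simpl in Hd. set (d := Rmin (1/2) (Rmin (Rmin d1 d2) (Rmin d3 d4))) in Hd.
    destruct Hd as [Hd [Hd1 [Hd2 [Hd3 Hd4]]]].
    exists (RInt hw d (1 - d)). exists d. split; auto. intros u v Hu Hv.
    change (Rabs (RInt hw u v - RInt hw d (1 - d)) < eps).
    assert (E1 : ex_RInt hw u d) by (apply ex_cont; auto; lra).
    assert (E2 : ex_RInt hw d (1-d)) by (apply ex_cont; auto; lra).
    assert (E3 : ex_RInt hw (1-d) v) by (apply ex_cont; auto; lra).
    rewrite <- (RInt_Chasles (V:=R_CompleteNormedModule) hw u (1-d) v); auto.
    2: { apply (ex_RInt_Chasles (V:=R_CompleteNormedModule) hw u d (1-d)); auto. }
    rewrite <- (RInt_Chasles (V:=R_CompleteNormedModule) hw u d (1-d)); auto.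
    unfold plus; simpl.
    replace (RInt hw u d + RInt hw d (1 - d) + RInt hw (1 - d) v - RInt hw d (1 - d))
      with (RInt hw u d + RInt hw (1 - d) v) by ring.
    pose proof (IB u d ltac:(lra) ltac:(lra)). pose proof (IB (1-d) v ltac:(lra) ltac:(lra)).
    pose proof (W_lo a b u Ha Hb ltac:(lra)). pose proof (W_hi a b v Ha Hb ltac:(lra)).
    assert (Wd : Wf a b d + / b = /a * Rpower d a + /b * (1 - Rpower (1-d) b)) by (unfold Wf; ring).
    assert (W1d : / a - Wf a b (1-d) = /a * (1 - Rpower (1-d) a) + /b * Rpower d b).
    { unfold Wf. replace (1 - (1 - d)) with d by ring. ring. }
    pose proof (P1 d ltac:(lra)). pose proof (P2 d ltac:(lra)).
    pose proof (P3 d ltac:(lra)). pose proof (P4 d ltac:(lra)).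
    assert (0 < /a) by (apply Rinv_0_lt_compat; lra). assert (0 < /b) by (apply Rinv_0_lt_compat; lra).
    assert (T : (Wf a b d - Wf a b u) + (Wf a b v - Wf a b (1-d)) <= (2/a + 2/b) * e).
    { unfold Rdiv. nra. }
    assert (HMK : 0 <= M * K) by nra.
    assert (Ce : C * e = eps) by (unfold e; field; lra).
    eapply Rle_lt_trans. apply Rabs_triang.
    assert (M * K * ((Wf a b d - Wf a b u) + (Wf a b v - Wf a b (1-d))) <= M * K * ((2/a+2/b)*e))
      by (apply Rmult_le_compat_l; auto).
    unfold C in Ce. nra. }
  exists (lim Fl). intros eps Heps.
  destruct (@complete_cauchy R_CompleteSpace Fl PF CF (mkposreal eps Heps)) as [d [Hd HP]].
  exists d; split; auto.
Qed.

Lemma key (F1 F2 D : R -> R) c I1 I2 :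
  (forall p, 0 < p < 1 -> continuous F1 p) -> (forall p, 0 < p < 1 -> continuous F2 p) ->
  (forall p, 0 < p < 1 -> derivable_pt_lim D p (F1 p - c * F2 p)) ->
  (forall e, e > 0 -> exists d, 0 < d /\ forall p, (0 < p < d \/ 1 - d < p < 1) -> Rabs (D p) < e) ->
  imp F1 I1 -> imp F2 I2 -> I1 = c * I2.
Proof.
  intros C1 C2 HD HDs H1 H2.
  destruct (Req_dec (I1 - c * I2) 0) as [Z|Z]; [lra|exfalso].
  set (z := Rabs (I1 - c * I2)). assert (Hz : 0 < z) by (apply Rabs_pos_lt; auto).
  set (e := z / (4 + Rabs c)). assert (He : e > 0).
  { unfold e; apply Rdiv_lt_0_compat; auto. pose proof (Rabs_pos c); lra. }
  destruct (H1 e He) as [d1 [Hd1 P1]]. destruct (H2 e He) as [d2 [Hd2 P2]].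
  destruct (HDs e He) as [d3 [Hd3 P3]].
  set (u := Rmin (Rmin d1 d2) (Rmin d3 (1/2)) / 2).
  assert (Hu : 0 < u /\ u < d1 /\ u < d2 /\ u < d3 /\ u <= 1/4).
  { assert (0 < Rmin d1 d2) by (apply Rmin_pos; lra). assert (0 < Rmin d3 (1/2)) by (apply Rmin_pos; lra).
    assert (0 < Rmin (Rmin d1 d2) (Rmin d3 (1/2))) by (apply Rmin_pos; lra).
    pose proof (Rmin_l d1 d2). pose proof (Rmin_r d1 d2). pose proof (Rmin_l d3 (1/2)). pose proof (Rmin_r d3 (1/2)).
    pose proof (Rmin_l (Rmin d1 d2) (Rmin d3 (1/2))). pose proof (Rmin_r (Rmin d1 d2) (Rmin d3 (1/2))).
    unfold u. lra. }
  destruct Hu as [Hu0 [Hu1 [Hu2 [Hu3 Hu4]]]].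
  set (v := 1 - u).
  assert (E1 : ex_RInt F1 u v) by (apply ex_cont; auto; unfold v; lra).
  assert (E2 : ex_RInt F2 u v) by (apply ex_cont; auto; unfold v; lra).
  assert (IS := is_RInt_minus _ _ _ _ _ _ (RInt_correct _ _ _ E1) (is_RInt_scal _ _ _ c _ (RInt_correct _ _ _ E2))).
  assert (ID : is_RInt (fun y => minus (F1 y) (scal c (F2 y))) u v (minus (D v) (D u))).
  { apply (is_RInt_derive (V:=R_CompleteNormedModule) D).
    - intros x Hx. unfold Rmin, Rmax in Hx; destruct Rle_dec; try (unfold v in *; lra).
      apply is_derive_Reals. apply HD. unfold v in *; lra.
    - intros x Hx. unfold Rmin, Rmax in Hx; destruct Rle_dec; try (unfold v in *; lra).
      apply (continuous_minus (V:=R_NormedModule)). apply C1; unfold v in *; lra.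
      apply (continuous_scal_r (K:=R_AbsRing) (V:=R_NormedModule)). apply C2; unfold v in *; lra. }
  assert (U1 := is_RInt_unique _ _ _ _ ID). assert (U2 := is_RInt_unique _ _ _ _ IS).
  assert (EQ : RInt F1 u v - c * RInt F2 u v = D v - D u).
  { transitivity (RInt (V:=R_CompleteNormedModule) (fun y => minus (F1 y) (scal c (F2 y))) u v).
    symmetry; exact U2. exact U1. }
  assert (A1 := P1 u v ltac:(lra) ltac:(unfold v; lra)).
  assert (A2 := P2 u v ltac:(lra) ltac:(unfold v; lra)).
  assert (A3 := P3 u ltac:(left; lra)). assert (A4 := P3 v ltac:(right; unfold v; lra)).
  assert (I1 - c * I2 = - (RInt F1 u v - I1) + c * (RInt F2 u v - I2) + (D v - D u)) by (rewrite <- EQ; ring).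
  assert (Rabs (I1 - c * I2) <= Rabs (RInt F1 u v - I1) + Rabs c * Rabs (RInt F2 u v - I2) + Rabs (D v) + Rabs (D u)).
  { rewrite H. rewrite <- Rabs_mult. eapply Rle_trans. apply Rabs_triang.
    eapply Rle_trans. apply Rplus_le_compat_r. eapply Rle_trans. apply Rabs_triang.
    rewrite Rabs_Ropp. apply Rle_refl.
    pose proof (Rabs_triang (D v) (- D u)). rewrite Rabs_Ropp in H0. unfold Rminus. lra. }
  fold z in H0. pose proof (Rabs_pos c).
  assert (Rabs c * Rabs (RInt F2 u v - I2) <= Rabs c * e) by (apply Rmult_le_compat_l; lra).
  assert (z = e * (4 + Rabs c)) by (unfold e; field; lra).
  nra.
Qed.

Definition Sx (x : list bool) (p : R) := sumR (map (fun xi => b2R xi - p) x).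

Fixpoint dB (p : R) (x : list bool) : R :=
  match x with
  | nil => 0
  | b :: x' => (if b then 1 else -1) * bern_prob p x' + (if b then p else 1 - p) * dB p x'
  end.

Lemma dB_deriv x p : derivable_pt_lim (fun q => bern_prob q x) p (dB p x).
Proof.
  induction x as [|b x IH]; simpl.
  - apply derivable_pt_lim_const.
  - apply (derivable_pt_lim_mult (fun q => if b then q else 1 - q) (fun q => bern_prob q x)); auto.
    destruct b. apply derivable_pt_lim_id.
    replace (-1) with (0 - 1) by ring. apply derivable_pt_lim_minus.
    apply derivable_pt_lim_const. apply derivable_pt_lim_id.
Qed.

Lemma dB_id x p : p * (1 - p) * dB p x = bern_prob p x * Sx x p.
Proof.
  induction x as [|b x IH]; unfold Sx in *; simpl.
  - ring.
  - assert (E : p * (1 - p) * ((if b then 1 else -1) * bern_prob p x + (if b then p else 1 - p) * dB p x)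
       = p * (1 - p) * (if b then 1 else -1) * bern_prob p x + (if b then p else 1 - p) * (p * (1 - p) * dB p x)) by ring.
    rewrite E, IH. destruct b; unfold b2R; ring.
Qed.

Lemma sum_deriv (A : Type) (F : R -> A -> R) (dF : A -> R) l p :
  (forall x, derivable_pt_lim (fun q => F q x) p (dF x)) ->
  derivable_pt_lim (fun q => sumR (map (F q) l)) p (sumR (map dF l)).
Proof.
  intros H. induction l as [|x l IH]; simpl.
  - apply derivable_pt_lim_const.
  - apply (derivable_pt_lim_plus (fun q => F q x) (fun q => sumR (map (F q) l))); auto.
Qed.

Lemma sumR_scal (A : Type) (F : A -> R) l c : c * sumR (map F l) = sumR (map (fun x => c * F x) l).
Proof. induction l; simpl. ring. rewrite <- IHl. ring. Qed.

Lemma sumR_ext (A : Type) (F G : A -> R) l : (forall x, F x = G x) -> sumR (map F l) = sumR (map G l).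
Proof. intros H. induction l; simpl; auto. rewrite H, IHl. auto. Qed.

Definition dv (f : R -> R) := forall p, exists l, derivable_pt_lim f p l.

Lemma dv_cont f : dv f -> forall p, continuous f p.
Proof. intros H p. destruct (H p) as [l Hl]. apply (ex_derive_continuous f). exists l. apply is_derive_Reals; auto. Qed.

Lemma dv_plus f g : dv f -> dv g -> dv (fun p => f p + g p).
Proof. intros Hf Hg p. destruct (Hf p) as [l1 H1]; destruct (Hg p) as [l2 H2].
  eexists; apply (derivable_pt_lim_plus f g); eauto. Qed.
Lemma dv_mult f g : dv f -> dv g -> dv (fun p => f p * g p).
Proof. intros Hf Hg p. destruct (Hf p) as [l1 H1]; destruct (Hg p) as [l2 H2].
  eexists; apply (derivable_pt_lim_mult f g); eauto. Qed.
Lemma dv_const c : dv (fun _ => c).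
Proof. intros p; eexists; apply derivable_pt_lim_const. Qed.
Lemma dv_id : dv (fun p => p).
Proof. intros p; eexists; apply derivable_pt_lim_id. Qed.
Lemma dv_sum (A : Type) (F : R -> A -> R) l : (forall x, dv (fun q => F q x)) -> dv (fun q => sumR (map (F q) l)).
Proof. intros H. induction l as [|x l IH]; simpl. apply dv_const.
  apply (dv_plus (fun q => F q x) (fun q => sumR (map (F q) l))); auto. Qed.
Lemma dv_bern x : dv (fun q => bern_prob q x).
Proof. intros p. eexists. apply dB_deriv. Qed.
Lemma dv_S x : dv (Sx x).
Proof. unfold Sx. apply (dv_sum bool (fun q xi => b2R xi - q)). intros xi.
  apply (dv_plus (fun _ => b2R xi) (fun q => - q)). apply dv_const.
  intros p; eexists; apply derivable_pt_lim_opp; apply derivable_pt_lim_id. Qed.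

Lemma bound01 (h : R -> R) : (forall p, continuous h p) -> exists M, 0 <= M /\ forall p, 0 <= p <= 1 -> Rabs (h p) <= M.
Proof.
  intros Hh. destruct (continuity_ab_maj (fun p => Rabs (h p)) 0 1 ltac:(lra)) as [Mx [HMx _]].
  { intros c _. apply continuity_pt_filterlim.
    apply (continuous_comp h Rabs). apply Hh. apply continuous_Rabs. }
  exists (Rabs (h Mx)). split; auto. apply Rabs_pos.
Qed.

Theorem lemma3p4 (n : nat) (f : list bool -> R) (alpha beta : R)
  (Ha : alpha > 0) (Hb : beta > 0) :
  let g := fun p => bern_expect n p f in
  exists E1 E2,
    beta_expect alpha beta
      (fun p => bern_expect n p
         (fun x => f x * sumR (map (fun xi => b2R xi - p) x))) E1 /\
    beta_expect alpha beta
      (fun p => g p * (p - alpha / (alpha + beta))) E2 /\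
    E1 = (alpha + beta) * E2.
Proof.
  intros g.
  set (h1 := fun p => bern_expect n p (fun x => f x * sumR (map (fun xi => b2R xi - p) x))).
  set (h2 := fun p => g p * (p - alpha / (alpha + beta))).
  set (w := beta_dens alpha beta).
  assert (dg : dv g).
  { unfold g, bern_expect. apply (dv_sum _ (fun q x => bern_prob q x * f x)). intros x.
    apply (dv_mult (fun q => bern_prob q x) (fun _ => f x)). apply dv_bern. apply dv_const. }
  assert (dh1 : dv h1).
  { unfold h1, bern_expect. apply (dv_sum _ (fun q x => bern_prob q x * (f x * Sx x q))). intros x.
    apply (dv_mult (fun q => bern_prob q x) (fun q => f x * Sx x q)). apply dv_bern.
    apply (dv_mult (fun _ => f x) (Sx x)). apply dv_const. apply dv_S. }
  assert (dh2 : dv h2).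
  { unfold h2. apply (dv_mult g (fun p => p - alpha / (alpha + beta))). auto.
    apply (dv_plus (fun p => p) (fun _ => - (alpha / (alpha + beta)))). apply dv_id. apply dv_const. }
  assert (cw : forall (h : R -> R), (forall p, continuous h p) -> forall p, 0 < p < 1 -> continuous (fun p => h p * w p) p).
  { intros h Hh p Hp. apply (continuous_mult h w). apply Hh. apply c_w; auto. }
  destruct (imp_exists alpha beta (fun _ => 1) Ha Hb (fun p => continuous_const 1 p)) as [B HB].
  destruct (imp_exists alpha beta h1 Ha Hb (dv_cont _ dh1)) as [I1 HI1].
  destruct (imp_exists alpha beta h2 Ha Hb (dv_cont _ dh2)) as [I2 HI2].
  assert (KEY : I1 = (alpha + beta) * I2).
  { apply (key (fun p => h1 p * w p) (fun p => h2 p * w p) (fun p => g p * Rpower p alpha * Rpower (1 - p) beta)); auto.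
    - apply cw. apply dv_cont; auto.
    - apply cw. apply dv_cont; auto.
    - intros p Hp.
      set (G' := sumR (map (fun x => dB p x * f x) (cube n))).
      assert (Hg : derivable_pt_lim g p G').
      { unfold g, bern_expect, G'. apply (sum_deriv _ (fun q x => bern_prob q x * f x)). intros x.
        apply (derivable_pt_lim_scal_right (fun q => bern_prob q x)). apply dB_deriv. }
      assert (Hd := derivable_pt_lim_mult _ _ _ _ _
               (derivable_pt_lim_mult _ _ _ _ _ Hg (proj1 (is_derive_Reals _ _ _) (dRpow p alpha ltac:(lra))))
               (proj1 (is_derive_Reals _ _ _) (dRpow1 p beta ltac:(lra)))).
      unfold mult_fct in Hd.
      match type of Hd with derivable_pt_lim _ _ ?V => replace (h1 p * w p - (alpha + beta) * (h2 p * w p)) with V end.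
      exact Hd.
      assert (Ea : Rpower p alpha = p * Rpower p (alpha - 1)).
      { transitivity (Rpower p (1 + (alpha - 1))). f_equal; ring. rewrite Rpower_plus, Rpower_1; lra. }
      assert (Eb : Rpower (1 - p) beta = (1 - p) * Rpower (1 - p) (beta - 1)).
      { transitivity (Rpower (1 - p) (1 + (beta - 1))). f_equal; ring. rewrite Rpower_plus, Rpower_1; lra. }
      assert (Eh1 : h1 p = p * (1 - p) * G').
      { unfold h1, bern_expect, G'. rewrite sumR_scal. apply sumR_ext. intros x.
        replace (p * (1 - p) * (dB p x * f x)) with ((p * (1 - p) * dB p x) * f x) by ring.
        rewrite dB_id. unfold Sx. ring. }
      unfold h2, w, beta_dens. rewrite Ea, Eb, Eh1. field. lra.
    - destruct (bound01 g (dv_cont _ dg)) as [Mg [HMg0 HMg]].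
      intros e He. set (e' := e / (Mg + 1)). assert (He' : e' > 0) by (unfold e'; apply Rdiv_lt_0_compat; lra).
      destruct (small1 alpha e' Ha He') as [d1 [Hd1 P1]].
      destruct (small1 beta e' Hb He') as [d2 [Hd2 P2]].
      exists (Rmin (Rmin d1 d2) (1/2)). split.
      { apply Rmin_pos; try lra. apply Rmin_pos; lra. }
      intros p Hp.
      pose proof (Rmin_l (Rmin d1 d2) (1/2)). pose proof (Rmin_r (Rmin d1 d2) (1/2)).
      pose proof (Rmin_l d1 d2). pose proof (Rmin_r d1 d2).
      assert (Hp01 : 0 < p < 1) by lra.
      pose proof (Rpow_pos p alpha). pose proof (Rpow_pos (1 - p) beta).
      pose proof (Rpow_le1 p alpha ltac:(lra) ltac:(lra)). pose proof (Rpow_le1 (1 - p) beta ltac:(lra) ltac:(lra)).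
      pose proof (HMg p ltac:(lra)). pose proof (Rabs_pos (g p)).
      rewrite Rabs_mult, Rabs_mult, (Rabs_pos_eq (Rpower p alpha)), (Rabs_pos_eq (Rpower (1 - p) beta)) by lra.
      assert (Ee : e = e' * (Mg + 1)) by (unfold e'; field; lra).
      destruct Hp as [Hp|Hp].
      + pose proof (P1 p ltac:(lra)).
        assert (Rabs (g p) * Rpower p alpha * Rpower (1 - p) beta <= Rabs (g p) * Rpower p alpha).
        { rewrite <- (Rmult_1_r (Rabs (g p) * Rpower p alpha)) at 2. apply Rmult_le_compat_l; nra. }
        assert (Rabs (g p) * Rpower p alpha <= Mg * e') by (apply Rmult_le_compat; lra).
        nra.
      + pose proof (P2 (1 - p) ltac:(lra)).
        assert (Rabs (g p) * Rpower p alpha * Rpower (1 - p) beta <= Rabs (g p) * Rpower (1 - p) beta).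
        { rewrite Rmult_assoc. apply Rmult_le_compat_l. lra. rewrite <- (Rmult_1_l (Rpower (1 - p) beta)) at 2. apply Rmult_le_compat_r; lra. }
        assert (Rabs (g p) * Rpower (1 - p) beta <= Mg * e') by (apply Rmult_le_compat; lra).
        nra. }
  exists (I1 / B), (I2 / B). split; [|split].
  - exists B, I1. split; [|split; auto].
    + assert (Heq : (fun p => 1 * w p) = beta_dens alpha beta) by (apply functional_extensionality; intros; unfold w; ring).
      rewrite <- Heq. apply imp_improper; auto. apply cw. intros; apply continuous_const.
    + apply (imp_improper (fun p => h1 p * w p)); auto. apply cw. apply dv_cont; auto.
  - exists B, I2. split; [|split; auto].
    + assert (Heq : (fun p => 1 * w p) = beta_dens alpha beta) by (apply functional_extensionality; intros; unfold w; ring).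
      rewrite <- Heq. apply imp_improper; auto. apply cw. intros; apply continuous_const.
    + apply (imp_improper (fun p => h2 p * w p)); auto. apply cw. apply dv_cont; auto.
  - rewrite KEY. unfold Rdiv. ring.
Qed.
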